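(* Each of the following five functions fails to be matrix-convex, in the following sense: there exist $n\ge 1$, a vector $\mathbf{s}\in\mathbb{R}^n$, two matrices $\mathbf{X}_1,\mathbf{X}_2$ in the indicated domain, and $\lambda\in[0,1]$ such that $$f(\mathbf{s},\lambda\mathbf{X}_1+(1-\lambda)\mathbf{X}_2) > \lambda f(\mathbf{s},\mathbf{X}_1)+(1-\lambda) f(\mathbf{s},\mathbf{X}_2).$$ (i) Directed functions, with domain the set of $n\times n$ entrywise nonnegative row-stochastic matrices $\mathbf{X}$ (i.e. $\mathbf{X}\mathbf{1}=\mathbf{1}$), where $\mathbf{D}^{\mathrm{in}}(\mathbf{X})=\mathrm{diag}(\mathbf{X}^\top\mathbf{1})$: - P-Dir: $f(\mathbf{s},\mathbf{X})=\mathbf{s}^\top(2\mathbf{I}-\mathbf{X})^{-\top}(2\mathbf{I}-\mathbf{X})^{-1}\mathbf{s}$; - D-Dir: $f(\mathbf{s},\mathbf{X})=\tfrac12\mathbf{s}^\top(2\mathbf{I}-\mathbf{X})^{-\top}(\mathbf{I}+\mathbf{D}^{\mathrm{in}}(\mathbf{X})-2\mathbf{X})(2\mathbf{I}-\mathbf{X})^{-1}\mathbf{s}$; - PD-Dir: $f(\mathbf{s},\mathbf{X})=\tfrac12\mathbf{s}^\top(2\mathbf{I}-\mathbf{X})^{-\top}(\mathbf{I}-\mathbf{D}^{\mathrm{in}}(\mathbf{X}))(2\mathbf{I}-\mathbf{X})^{-1}\mathbf{s}$. (ii) Undirected functions, with domain the set of $n\times n$ Laplacian matrices $\mathbf{L}$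 of undirected graphs with nonnegative edge weights: - P-Undir: $f(\mathbf{s},\mathbf{L})=\mathbf{s}^\top(\mathbf{I}+\mathbf{L})^{-2}\mathbf{s}$; - D-Undir: $f(\mathbf{s},\mathbf{L})=\mathbf{s}^\top(\mathbf{I}+\mathbf{L})^{-1}\mathbf{L}(\mathbf{I}+\mathbf{L})^{-1}\mathbf{s}$.
   Context: $\mathbf{1}$ is the all-ones vector and $\mathbf{I}$ the identity matrix. A Laplacian of an undirected weighted graph with weight matrix $\mathbf{W}$ (symmetric, nonnegative, zero diagonal) is $\mathbf{L}=\mathrm{diag}(\mathbf{W}\mathbf{1})-\mathbf{W}$. For a row-stochastic nonnegative $\mathbf{X}$, the matrix $2\mathbf{I}-\mathbf{X}$ is invertible, and $\mathbf{I}+\mathbf{L}$ is invertible for any such Laplacian. A function $f(\mathbf{s},\cdot)$ is called matrix-convex if $f(\mathbf{s},\lambda\mathbf{X}_1+(1-\lambda)\mathbf{X}_2)\le\lambda f(\mathbf{s},\mathbf{X}_1)+(1-\lambda)f(\mathbf{s},\mathbf{X}_2)$ for all $\lambda\in[0,1]$ and all matrices $\mathbf{X}_1,\mathbf{X}_2$ in the domain. *)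

(* Defs.v *)
From HB Require Import structures.
From mathcomp Require Import all_boot all_order all_algebra.
From mathcomp Require Import reals.
Set Implicit Arguments. Unset Strict Implicit. Unset Printing Implicit Defensive.
Import Order.TTheory GRing.Theory Num.Theory.
Local Open Scope ring_scope.

Section Defs.
Variable R : realType.

Definition ones (n : nat) : 'cV[R]_n := const_mx 1.

Definition row_stochastic (n : nat) (X : 'M[R]_n) : Prop :=
  (forall i j, 0 <= X i j) /\ X *m ones n = ones n.

Definition is_laplacian (n : nat) (L : 'M[R]_n) : Prop :=
  exists W : 'M[R]_n,
    W^T = W /\ (forall i j, 0 <= W i j) /\ (forall i, W i i = 0) /\
    L = diag_mx (W *m ones n)^T - W.

Definition Din (n : nat) (X : 'M[R]_n) : 'M[R]_n := diag_mx (X^T *m ones n)^T.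

Definition qform (n : nat) (s : 'cV[R]_n) (M : 'M[R]_n) : R :=
  (s^T *m M *m s) 0 0.

Definition invIX (n : nat) (X : 'M[R]_n) : 'M[R]_n := invmx (2%:M - X).

Definition f_PDir (n : nat) (s : 'cV[R]_n) (X : 'M[R]_n) : R :=
  qform s ((invIX X)^T *m invIX X).

Definition f_DDir (n : nat) (s : 'cV[R]_n) (X : 'M[R]_n) : R :=
  2^-1 * qform s ((invIX X)^T *m (1%:M + Din X - 2%:R *: X) *m invIX X).

Definition f_PDDir (n : nat) (s : 'cV[R]_n) (X : 'M[R]_n) : R :=
  2^-1 * qform s ((invIX X)^T *m (1%:M - Din X) *m invIX X).

Definition f_PUndir (n : nat) (s : 'cV[R]_n) (L : 'M[R]_n) : R :=
  qform s (invmx (1%:M + L) *m invmx (1%:M + L)).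

Definition f_DUndir (n : nat) (s : 'cV[R]_n) (L : 'M[R]_n) : R :=
  qform s (invmx (1%:M + L) *m L *m invmx (1%:M + L)).

Definition not_matrix_convex (dom : forall n, 'M[R]_n -> Prop)
    (f : forall n, 'cV[R]_n -> 'M[R]_n -> R) : Prop :=
  exists n : nat, (0 < n)%N /\
  exists (s : 'cV[R]_n) (X1 X2 : 'M[R]_n) (lam : R),
    dom n X1 /\ dom n X2 /\ 0 <= lam <= 1 /\
    f n s (lam *: X1 + (1 - lam) *: X2) > lam * f n s X1 + (1 - lam) * f n s X2.

End Defs.

(* Main.v *)
Require Import Defs.
From HB Require Import structures.
From mathcomp Require Import all_boot all_order all_algebra.
From mathcomp Require Import reals ring lra.
Import Order.TTheory GRing.Theory Num.Theory.
Local Open Scope ring_scope.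

Section Aux.
Variable R : realType.
Definition mkM n (l : seq (seq R)) : 'M[R]_n := \matrix_(i,j) nth 0 (nth [::] l i) j.
Definition mkV n (l : seq R) : 'cV[R]_n := \col_i nth 0 l i.

Lemma inv_apply n (A B : 'M[R]_n) (s y : 'cV[R]_n) :
  A *m B = 1%:M -> A *m y = s -> invmx A *m s = y.
Proof. by move=> AB Ay; have [uA _] := mulmx1_unit AB; rewrite -Ay mulKmx. Qed.

Lemma qform_sand n (s y : 'cV[R]_n) (B M : 'M[R]_n) :
  B *m s = y -> qform s (B^T *m M *m B) = qform y M.
Proof. by move=> <-; rewrite /qform trmx_mul !mulmxA. Qed.

Lemma qform_sand2 n (s y : 'cV[R]_n) (B : 'M[R]_n) :
  B *m s = y -> qform s (B^T *m B) = qform y 1%:M.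
Proof. by move=> By; rewrite -(@qform_sand n s y B 1%:M By) mulmx1. Qed.

Lemma qform_sand3 n (s y : 'cV[R]_n) (B : 'M[R]_n) :
  B *m s = y -> B^T = B -> qform s (B *m B) = qform y 1%:M.
Proof. by move=> By BT; rewrite -(@qform_sand n s y B 1%:M By) mulmx1 BT. Qed.

Lemma qform_sand4 n (s y : 'cV[R]_n) (B M : 'M[R]_n) :
  B *m s = y -> B^T = B -> qform s (B *m M *m B) = qform y M.
Proof. by move=> By BT; rewrite -(@qform_sand n s y B M By) BT. Qed.
Lemma inv_eq n (A B : 'M[R]_n) : A *m B = 1%:M -> invmx A = B.
Proof.
move=> AB; have [uA _] := mulmx1_unit AB.
by rewrite -[invmx A]mulmx1 -AB mulmxA mulVmx // mul1mx.
Qed.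
End Aux.
Arguments mkM {R} n l.
Arguments mkV {R} n l.

Ltac crunch := repeat progress (rewrite ?mxE ?big_ord_recl ?big_ord0 /=).
Ltac ent := case => [[|[|[|?]]] ?] //; case => [[|[|[|?]]] ?] //; crunch; lra.
Ltac mxeq := apply/matrixP; case => [[|[|[|?]]] ?] //; case => [[|[|[|?]]] ?] //;
  crunch; lra.

Lemma caseP (R : realType) : not_matrix_convex (@row_stochastic R) (@f_PDir R).
Proof.
exists 2%N; split => //.
pose X1 : 'M[R]_2 := mkM 2 [:: [:: 1; 0]; [:: 0; 1]].
pose X2 : 'M[R]_2 := mkM 2 [:: [:: 1; 0]; [:: 1; 0]].
pose Xm : 'M[R]_2 := mkM 2 [:: [:: 1; 0]; [:: 1/2; 1/2]].
pose s : 'cV[R]_2 := mkV 2 [:: 2; 1].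
exists s, X1, X2, (1/2).
have -> : (1/2) *: X1 + (1 - 1/2) *: X2 = Xm by mxeq.
split; [split; [case => [[|[|?]] ?] //; case => [[|[|?]] ?] //; crunch; lra | mxeq]|].
split; [split; [case => [[|[|?]] ?] //; case => [[|[|?]] ?] //; crunch; lra | mxeq]|].
split; first lra.
have E1 : f_PDir s X1 = 5.
  rewrite /f_PDir /invIX (@qform_sand2 R 2 s (mkV 2 [:: 2; 1])).
    by rewrite /qform; crunch; lra.
  apply: (@inv_apply R 2 _ (mkM 2 [:: [:: 1; 0]; [:: 0; 1]])); mxeq.
have E2 : f_PDir s X2 = 4 + 9/4.
  rewrite /f_PDir /invIX (@qform_sand2 R 2 s (mkV 2 [:: 2; 3/2])).
    by rewrite /qform; crunch; lra.
  apply: (@inv_apply R 2 _ (mkM 2 [:: [:: 1; 0]; [:: 1/2; 1/2]])); mxeq.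
have Em : f_PDir s Xm = 4 + 16/9.
  rewrite /f_PDir /invIX (@qform_sand2 R 2 s (mkV 2 [:: 2; 4/3])).
    by rewrite /qform; crunch; lra.
  apply: (@inv_apply R 2 _ (mkM 2 [:: [:: 1; 0]; [:: 1/3; 2/3]])); mxeq.
rewrite E1 E2 Em; lra.
Qed.
Lemma caseD (R : realType) : not_matrix_convex (@row_stochastic R) (@f_DDir R).
Proof.
exists 2%N; split => //.
pose X1 : 'M[R]_2 := mkM 2 [:: [:: 1; 0]; [:: 0; 1]].
pose X2 : 'M[R]_2 := mkM 2 [:: [:: 0; 1]; [:: 1; 0]].
pose Xm : 'M[R]_2 := mkM 2 [:: [:: 1/2; 1/2]; [:: 1/2; 1/2]].
pose s : 'cV[R]_2 := mkV 2 [:: 1; -1].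
exists s, X1, X2, (1/2).
have -> : (1/2) *: X1 + (1 - 1/2) *: X2 = Xm by mxeq.
split; [split; [ent | mxeq]|].
split; [split; [ent | mxeq]|].
split; first lra.
have E1 : f_DDir s X1 = 0.
  have Hy : invmx (2%:M - X1) *m s = mkV 2 [:: 1; -1] by apply: (@inv_apply R 2 _ (mkM 2 [:: [:: 1; 0]; [:: 0; 1]])); mxeq.
  rewrite /f_DDir /invIX (@qform_sand R 2 s _ _ _ Hy).
  by rewrite /qform /Din; crunch; lra.
have E2 : f_DDir s X2 = 4/9.
  have Hy : invmx (2%:M - X2) *m s = mkV 2 [:: 1/3; -1/3] by apply: (@inv_apply R 2 _ (mkM 2 [:: [:: 2/3; 1/3]; [:: 1/3; 2/3]])); mxeq.
  rewrite /f_DDir /invIX (@qform_sand R 2 s _ _ _ Hy).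
  by rewrite /qform /Din; crunch; lra.
have Em : f_DDir s Xm = 1/2.
  have Hy : invmx (2%:M - Xm) *m s = mkV 2 [:: 1/2; -1/2] by apply: (@inv_apply R 2 _ (mkM 2 [:: [:: 3/4; 1/4]; [:: 1/4; 3/4]])); mxeq.
  rewrite /f_DDir /invIX (@qform_sand R 2 s _ _ _ Hy).
  by rewrite /qform /Din; crunch; lra.
rewrite E1 E2 Em; lra.
Qed.

Lemma casePD (R : realType) : not_matrix_convex (@row_stochastic R) (@f_PDDir R).
Proof.
exists 2%N; split => //.
pose X1 : 'M[R]_2 := mkM 2 [:: [:: 1; 0]; [:: 1; 0]].
pose X2 : 'M[R]_2 := mkM 2 [:: [:: 0; 1]; [:: 0; 1]].
pose Xm : 'M[R]_2 := mkM 2 [:: [:: 1/2; 1/2]; [:: 1/2; 1/2]].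
pose s : 'cV[R]_2 := mkV 2 [:: 1; -1].
exists s, X1, X2, (1/2).
have -> : (1/2) *: X1 + (1 - 1/2) *: X2 = Xm by mxeq.
split; [split; [ent | mxeq]|].
split; [split; [ent | mxeq]|].
split; first lra.
have E1 : f_PDDir s X1 = -1/2.
  have Hy : invmx (2%:M - X1) *m s = mkV 2 [:: 1; 0] by apply: (@inv_apply R 2 _ (mkM 2 [:: [:: 1; 0]; [:: 1/2; 1/2]])); mxeq.
  rewrite /f_PDDir /invIX (@qform_sand R 2 s _ _ _ Hy).
  by rewrite /qform /Din; crunch; lra.
have E2 : f_PDDir s X2 = -1/2.
  have Hy : invmx (2%:M - X2) *m s = mkV 2 [:: 0; -1] by apply: (@inv_apply R 2 _ (mkM 2 [:: [:: 1/2; 1/2]; [:: 0; 1]])); mxeq.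
  rewrite /f_PDDir /invIX (@qform_sand R 2 s _ _ _ Hy).
  by rewrite /qform /Din; crunch; lra.
have Em : f_PDDir s Xm = 0.
  have Hy : invmx (2%:M - Xm) *m s = mkV 2 [:: 1/2; -1/2] by apply: (@inv_apply R 2 _ (mkM 2 [:: [:: 3/4; 1/4]; [:: 1/4; 3/4]])); mxeq.
  rewrite /f_PDDir /invIX (@qform_sand R 2 s _ _ _ Hy).
  by rewrite /qform /Din; crunch; lra.
rewrite E1 E2 Em; lra.
Qed.

Lemma caseDU (R : realType) : not_matrix_convex (@is_laplacian R) (@f_DUndir R).
Proof.
exists 2%N; split => //.
pose X1 : 'M[R]_2 := mkM 2 [:: [:: 0; 0]; [:: 0; 0]].
pose X2 : 'M[R]_2 := mkM 2 [:: [:: 2; -2]; [:: -2; 2]].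
pose Xm : 'M[R]_2 := mkM 2 [:: [:: 1; -1]; [:: -1; 1]].
pose s : 'cV[R]_2 := mkV 2 [:: 3; 0].
exists s, X1, X2, (1/2).
have -> : (1/2) *: X1 + (1 - 1/2) *: X2 = Xm by mxeq.
split; [exists (mkM 2 [:: [:: 0; 0]; [:: 0; 0]] : 'M[R]_2); split; [mxeq | split; [ent | split; [case => [[|[|[|?]]] ?] //; crunch; lra | mxeq]]]|].
split; [exists (mkM 2 [:: [:: 0; 2]; [:: 2; 0]] : 'M[R]_2); split; [mxeq | split; [ent | split; [case => [[|[|[|?]]] ?] //; crunch; lra | mxeq]]]|].
split; first lra.
have E1 : f_DUndir s X1 = 0.
  rewrite /f_DUndir (@inv_eq R 2 _ (mkM 2 [:: [:: 1; 0]; [:: 0; 1]])); last by mxeq.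
  rewrite (@qform_sand4 R _ s (mkV 2 [:: 3; 0]) _ _); [ | by mxeq | by mxeq].
  by rewrite /qform; crunch; lra.
have E2 : f_DUndir s X2 = 18/25.
  rewrite /f_DUndir (@inv_eq R 2 _ (mkM 2 [:: [:: 3/5; 2/5]; [:: 2/5; 3/5]])); last by mxeq.
  rewrite (@qform_sand4 R _ s (mkV 2 [:: 9/5; 6/5]) _ _); [ | by mxeq | by mxeq].
  by rewrite /qform; crunch; lra.
have Em : f_DUndir s Xm = 1.
  rewrite /f_DUndir (@inv_eq R 2 _ (mkM 2 [:: [:: 2/3; 1/3]; [:: 1/3; 2/3]])); last by mxeq.
  rewrite (@qform_sand4 R _ s (mkV 2 [:: 2; 1]) _ _); [ | by mxeq | by mxeq].
  by rewrite /qform; crunch; lra.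
rewrite E1 E2 Em; lra.
Qed.

Lemma casePU (R : realType) : not_matrix_convex (@is_laplacian R) (@f_PUndir R).
Proof.
exists 3%N; split => //.
pose X1 : 'M[R]_3 := mkM 3 [:: [:: 0; 0; 0]; [:: 0; 2; -2]; [:: 0; -2; 2]].
pose X2 : 'M[R]_3 := mkM 3 [:: [:: 8; 0; -8]; [:: 0; 2; -2]; [:: -8; -2; 10]].
pose Xm : 'M[R]_3 := mkM 3 [:: [:: 4; 0; -4]; [:: 0; 2; -2]; [:: -4; -2; 6]].
pose s : 'cV[R]_3 := mkV 3 [:: 1; 2; 0].
exists s, X1, X2, (1/2).
have -> : (1/2) *: X1 + (1 - 1/2) *: X2 = Xm by mxeq.
split; [exists (mkM 3 [:: [:: 0; 0; 0]; [:: 0; 0; 2]; [:: 0; 2; 0]] : 'M[R]_3); split; [mxeq | split; [ent | split; [case => [[|[|[|?]]] ?] //; crunch; lra | mxeq]]]|].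
split; [exists (mkM 3 [:: [:: 0; 0; 8]; [:: 0; 0; 2]; [:: 8; 2; 0]] : 'M[R]_3); split; [mxeq | split; [ent | split; [case => [[|[|[|?]]] ?] //; crunch; lra | mxeq]]]|].
split; first lra.
have E1 : f_PUndir s X1 = 77/25.
  rewrite /f_PUndir (@inv_eq R 3 _ (mkM 3 [:: [:: 1; 0; 0]; [:: 0; 3/5; 2/5]; [:: 0; 2/5; 3/5]])); last by mxeq.
  rewrite (@qform_sand3 R _ s (mkV 3 [:: 1; 6/5; 4/5]) _); [ | by mxeq | by mxeq].
  by rewrite /qform; crunch; lra.
have E2 : f_PUndir s X2 = 14717/4761.
  rewrite /f_PUndir (@inv_eq R 3 _ (mkM 3 [:: [:: 29/69; 16/69; 8/23]; [:: 16/69; 35/69; 6/23]; [:: 8/23; 6/23; 9/23]])); last by mxeq.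
  rewrite (@qform_sand3 R _ s (mkV 3 [:: 61/69; 86/69; 20/23]) _); [ | by mxeq | by mxeq].
  by rewrite /qform; crunch; lra.
have Em : f_PUndir s Xm = 4229/1369.
  rewrite /f_PUndir (@inv_eq R 3 _ (mkM 3 [:: [:: 17/37; 8/37; 12/37]; [:: 8/37; 19/37; 10/37]; [:: 12/37; 10/37; 15/37]])); last by mxeq.
  rewrite (@qform_sand3 R _ s (mkV 3 [:: 33/37; 46/37; 32/37]) _); [ | by mxeq | by mxeq].
  by rewrite /qform; crunch; lra.
rewrite E1 E2 Em; lra.
Qed.

Theorem proposition1 (R : realType) :
  not_matrix_convex (@row_stochastic R) (@f_PDir R) /\
  not_matrix_convex (@row_stochastic R) (@f_DDir R) /\
  not_matrix_convex (@row_stochastic R) (@f_PDDir R) /\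
  not_matrix_convex (@is_laplacian R) (@f_PUndir R) /\
  not_matrix_convex (@is_laplacian R) (@f_DUndir R).
Proof.
split; first exact: caseP.
split; first exact: caseD.
split; first exact: casePD.
split; first exact: casePU.
exact: caseDU.
Qed.
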